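(* Let $V\neq\emptyset$, let $F\colon V\leadsto V$ be a strict undirected multifunction and let $U,W\subset V$ be nonempty. Then $F$ is $(U,W)$-bipartite if and only if $V$ is the disjoint union of $U$ and $W$ and for every $n\in\mathbb{N}=\{0,1,2,\dots\}$ we have $F^{2n}_{-}(U)=U$, $F^{2n}_{-}(W)=W$, $F^{2n+1}_{-}(U)=W$ and $F^{2n+1}_{-}(W)=U$.
   Context: A multifunction $F\colon V\leadsto V$ is a map $F\colon V\to P(V)$; it is strict if $F(v)\neq\emptyset$ for all $v$, and undirected if $u\in F(v)\iff v\in F(u)$ for all $u,v$. For $A\subset V$, $F_{-}(A)=\{x\in V\mid F(x)\cap A\neq\emptyset\}$, and the iterates are $F^{0}_{-}(A)=A$, $F^{n}_{-}(A)=F_{-}(F^{n-1}_{-}(A))$ for $n\ge1$. A set $U\subset V$ is independent if $U\cap F_{-}(U)=\emptyset$. For nonempty $U,W\subset V$, $F$ is $(U,W)$-bipartite if $U,W$ are independent and $V$ is the disjoint union of $U$ and $W$. *)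

(* Defs.v *)
From Stdlib Require Import Arith.

Definition multifun (V : Type) := V -> (V -> Prop).

Definition set_eq {V : Type} (A B : V -> Prop) : Prop := forall x, A x <-> B x.

Definition nonempty {V : Type} (A : V -> Prop) : Prop := exists x, A x.

Definition strict {V : Type} (F : multifun V) : Prop :=
  forall v, nonempty (F v).

Definition undirected {V : Type} (F : multifun V) : Prop :=
  forall u v, F v u <-> F u v.

Definition Fminus {V : Type} (F : multifun V) (A : V -> Prop) : V -> Prop :=
  fun x => exists y, F x y /\ A y.

Fixpoint Fminus_iter {V : Type} (F : multifun V) (n : nat) (A : V -> Prop)
  : V -> Prop :=
  match n with
  | O => A
  | S m => Fminus F (Fminus_iter F m A)
  end.

Definition independent {V : Type} (F : multifun V) (U : V -> Prop) : Prop :=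
  forall x, ~ (U x /\ Fminus F U x).

Definition disjoint_union {V : Type} (U W : V -> Prop) : Prop :=
  (forall x, U x \/ W x) /\ (forall x, ~ (U x /\ W x)).

Definition bipartite {V : Type} (F : multifun V) (U W : V -> Prop) : Prop :=
  independent F U /\ independent F W /\ disjoint_union U W.

(* Main.v *)
Require Import Defs.
From Stdlib Require Import Arith Lia.

Lemma Fminus_ext {V : Type} (F : multifun V) (A B : V -> Prop) :
  set_eq A B -> set_eq (Fminus F A) (Fminus F B).
Proof.
  intros H x; unfold Fminus; split; intros [y [Hy Ay]]; exists y; split; auto; apply H; auto.
Qed.

Lemma seq_trans {V : Type} (A B C : V -> Prop) : set_eq A B -> set_eq B C -> set_eq A C.
Proof. intros H1 H2 x; split; intro; [apply H2, H1 | apply H1, H2]; auto. Qed.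

Theorem lemma4p12 (V : Type) (F : multifun V) (U W : V -> Prop) :
  (exists v : V, True) ->
  strict F -> undirected F ->
  nonempty U -> nonempty W ->
  (bipartite F U W <->
   (disjoint_union U W /\
    forall n : nat,
      set_eq (Fminus_iter F (2 * n) U) U /\
      set_eq (Fminus_iter F (2 * n) W) W /\
      set_eq (Fminus_iter F (2 * n + 1) U) W /\
      set_eq (Fminus_iter F (2 * n + 1) W) U)).
Proof.
  intros _ Hs _ _ _. split.
  - intros [IU [IW [Hc Hd]]].
    assert (HU : set_eq (Fminus F U) W).
    { intros x; split.
      - intros Hx. destruct (Hc x) as [Ux|Wx]; auto. exfalso; apply (IU x); auto.
      - intros Wx. destruct (Hs x) as [y Hy]. exists y; split; auto.
        destruct (Hc y) as [Uy|Wy]; auto. exfalso; apply (IW x); split; auto.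
        exists y; auto. }
    assert (HW : set_eq (Fminus F W) U).
    { intros x; split.
      - intros Hx. destruct (Hc x) as [Ux|Wx]; auto. exfalso; apply (IW x); auto.
      - intros Ux. destruct (Hs x) as [y Hy]. exists y; split; auto.
        destruct (Hc y) as [Uy|Wy]; auto. exfalso; apply (IU x); split; auto.
        exists y; auto. }
    split; [split; auto|].
    induction n as [|n IH].
    + simpl. split; [|split; [|split]]; auto; intro; tauto.
    + destruct IH as [H1 [H2 [H3 H4]]].
      replace (2 * S n) with (S (S (2 * n))) by lia.
      replace (S (S (2 * n)) + 1) with (S (S (2 * n + 1))) by lia.
      simpl Fminus_iter.
      split; [|split; [|split]].
      * apply (seq_trans _ _ _ (Fminus_ext F _ _ (seq_trans _ _ _ (Fminus_ext F _ _ H1) HU)) HW).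
      * apply (seq_trans _ _ _ (Fminus_ext F _ _ (seq_trans _ _ _ (Fminus_ext F _ _ H2) HW)) HU).
      * apply (seq_trans _ _ _ (Fminus_ext F _ _ (seq_trans _ _ _ (Fminus_ext F _ _ H3) HW)) HU).
      * apply (seq_trans _ _ _ (Fminus_ext F _ _ (seq_trans _ _ _ (Fminus_ext F _ _ H4) HU)) HW).
  - intros [[Hc Hd] H]. destruct (H 0) as [_ [_ [H3 H4]]]. simpl in H3, H4.
    split; [|split; [|split; auto]].
    + intros x [Ux Fx]. apply (Hd x); split; auto. apply H3; auto.
    + intros x [Wx Fx]. apply (Hd x); split; auto. apply H4; auto.
Qed.
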